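(* For a time step $\Delta t>0$, the matrix $$\mathbf{P}=\begin{bmatrix}D_V''&-\frac{\Delta t}{2\hbar}H\\-\frac{\Delta t}{2\hbar}H&D_V''\end{bmatrix}$$ is positive definite if and only if $$\Delta t<\Delta t_{\mathrm{CFL,gen}}=\frac{2}{\rho\!\left(\frac{1}{\hbar}(D_V'')^{-1/2}H(D_V'')^{-1/2}\right)},$$ where $\rho(\cdot)$ is the spectral radius.
   Context: Fix constants $\hbar>0$, $m>0$, cell sizes $\Delta x,\Delta y,\Delta z>0$ and positive integers $n_x,n_y,n_z$. The region is a box of $n_x\times n_y\times n_z$ primary cells of size $\Delta x\times\Delta y\times\Delta z$ with primary nodes $(i,j,k)$, $1\le i\le n_x+1$, $1\le j\le n_y+1$, $1\le k\le n_z+1$. Let $N=(n_x+1)(n_y+1)(n_z+1)$; node-indexed vectors use the ordering $i+(j-1)(n_x+1)+(k-1)(n_x+1)(n_y+1)$. Real potential values $U_{i,j,k}$ are given at the nodes; $D_U$ is the $N\times N$ diagonal matrix containing them. Let $I_p$ be the $p\times p$ identity, $\tilde I_p=\mathrm{diag}(\tfrac12,1,\dots,1,\tfrac12)$ ($p\times p$), $W_p=[0_{p\times1}\ I_p]-[I_p\ 0_{p\times 1}]$ ($p\times(p+1)$), $\otimes$ the Kronecker product. Define $D_V''=\Delta x\Delta y\Delta z\,\tilde I_{n_z+1}\otimes\tilde I_{n_y+1}\otimes\tilde I_{n_x+1}$; $D=[D_x\ D_y\ D_z]$ with $D_x=-I_{n_z+1}\otimes I_{n_y+1}\otimes W_{n_x}^T$,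 $D_y=-I_{n_z+1}\otimes W_{n_y}^T\otimes I_{n_x+1}$, $D_z=-W_{n_z}^T\otimes I_{n_y+1}\otimes I_{n_x+1}$; $D_S''=\mathrm{diag}(\Delta y\Delta z\,\tilde I_{n_z+1}\otimes\tilde I_{n_y+1}\otimes I_{n_x},\ \Delta x\Delta z\,\tilde I_{n_z+1}\otimes I_{n_y}\otimes\tilde I_{n_x+1},\ \Delta x\Delta y\,I_{n_z}\otimes\tilde I_{n_y+1}\otimes\tilde I_{n_x+1})$; $D_l'=\mathrm{diag}(\Delta x\, I_{n_x(n_y+1)(n_z+1)},\ \Delta y\, I_{(n_x+1)n_y(n_z+1)},\ \Delta z\, I_{(n_x+1)(n_y+1)n_z})$; $H=\frac{\hbar^2}{2m}D D_S''(D_l')^{-1}D^T+D_V''D_U$. *)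

(* Defs.v *)
From HB Require Import structures.
From mathcomp Require Import all_boot all_order all_algebra.
From mathcomp Require Import mxtens complex.
Set Implicit Arguments. Unset Strict Implicit. Unset Printing Implicit Defensive.
Import Order.TTheory GRing.Theory Num.Theory.
Local Open Scope ring_scope.

Section Defs.
Variable R : rcfType.

Definition Itilde (p : nat) : 'M[R]_p :=
  diag_mx (\row_(i < p) (if (i == 0%N :> nat) || (i == p.-1 :> nat) then 2^-1 else 1)).

Definition Wmx (p : nat) : 'M[R]_(p, p.+1) :=
  \matrix_(i < p, j < p.+1) (((j : nat) == i.+1)%:R - ((j : nat) == i)%:R).

Definition bdiag3 (a b c : nat) (A : 'M[R]_a) (B : 'M[R]_b) (C : 'M[R]_c)
  : 'M[R]_(a + (b + c)) :=
  block_mx A 0 0 (block_mx B 0 0 C).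

Definition diag_invsqrt (n : nat) (A : 'M[R]_n) : 'M[R]_n :=
  diag_mx (\row_i (Num.sqrt (A i i))^-1).

Definition posdef (n : nat) (A : 'M[R]_n) : Prop :=
  A^T = A /\ forall v : 'cV[R]_n, v != 0 -> 0 < (v^T *m A *m v) 0 0.

Definition cplx_eigs (n : nat) (A : 'M[R]_n) : seq R[i] :=
  sval (closed_field_poly_normal (char_poly (map_mx (fun x : R => x%:C%C) A))).

Definition spectral_radius (n : nat) (A : 'M[R]_n) : R :=
  \big[Num.max/0]_(z <- cplx_eigs A) Normc.normc z.

End Defs.

Section Model.
Variables (R : rcfType) (hbar mass dx dy dz : R) (nx ny nz : nat).

Definition Nn := (nz.+1 * ny.+1 * nx.+1)%N.
Definition Ex := (nz.+1 * ny.+1 * nx)%N.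
Definition Ey := (nz.+1 * ny * nx.+1)%N.
Definition Ez := (nz * ny.+1 * nx.+1)%N.

Definition DV2 : 'M[R]_Nn :=
  (dx * dy * dz) *: (Itilde R nz.+1 *t Itilde R ny.+1 *t Itilde R nx.+1).

(* D_U : node (i,j,k) (0-based here) gets index k*(ny+1)*(nx+1) + j*(nx+1) + i,
   which is the ordering of the paper and of the Kronecker products. *)
Definition DU (U : 'I_nx.+1 -> 'I_ny.+1 -> 'I_nz.+1 -> R) : 'M[R]_Nn :=
  diag_mx (\row_(a < Nn)
    let kj := (mxtens_unindex a).1 in
    let i := (mxtens_unindex a).2 in
    U i (mxtens_unindex kj).2 (mxtens_unindex kj).1).

Definition Dx : 'M[R]_(Nn, Ex) :=
  - ((1%:M : 'M[R]_nz.+1) *t (1%:M : 'M[R]_ny.+1) *t (Wmx R nx)^T).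
Definition Dy : 'M[R]_(Nn, Ey) :=
  - ((1%:M : 'M[R]_nz.+1) *t (Wmx R ny)^T *t (1%:M : 'M[R]_nx.+1)).
Definition Dz : 'M[R]_(Nn, Ez) :=
  - ((Wmx R nz)^T *t (1%:M : 'M[R]_ny.+1) *t (1%:M : 'M[R]_nx.+1)).

Definition Dmx : 'M[R]_(Nn, Ex + (Ey + Ez)) := row_mx Dx (row_mx Dy Dz).

Definition DS2 : 'M[R]_(Ex + (Ey + Ez)) :=
  bdiag3 ((dy * dz) *: (Itilde R nz.+1 *t Itilde R ny.+1 *t (1%:M : 'M[R]_nx)))
         ((dx * dz) *: (Itilde R nz.+1 *t (1%:M : 'M[R]_ny) *t Itilde R nx.+1))
         ((dx * dy) *: ((1%:M : 'M[R]_nz) *t Itilde R ny.+1 *t Itilde R nx.+1)).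

Definition Dl1 : 'M[R]_(Ex + (Ey + Ez)) :=
  bdiag3 (dx%:M : 'M[R]_Ex) (dy%:M : 'M[R]_Ey) (dz%:M : 'M[R]_Ez).

Definition Hmx (U : 'I_nx.+1 -> 'I_ny.+1 -> 'I_nz.+1 -> R) : 'M[R]_Nn :=
  (hbar ^+ 2 / (2 * mass)) *: (Dmx *m DS2 *m invmx Dl1 *m Dmx^T) + DV2 *m DU U.

Definition Pmx (U : 'I_nx.+1 -> 'I_ny.+1 -> 'I_nz.+1 -> R) (dt : R) : 'M[R]_(Nn + Nn) :=
  block_mx DV2 (- (dt / (2 * hbar)) *: Hmx U)
           (- (dt / (2 * hbar)) *: Hmx U) DV2.

End Model.

(* Main.v *)
Require Import Defs.
From HB Require Import structures.
From mathcomp Require Import all_boot all_order all_algebra.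
From mathcomp Require Import mxtens complex.
From mathcomp Require Import spectral sesquilinear.
From mathcomp Require Import lra ring.
Import Order.TTheory GRing.Theory Num.Theory.
Local Open Scope ring_scope.
Set Implicit Arguments. Unset Strict Implicit. Unset Printing Implicit Defensive.
Section Core.
Variable R : rcfType.

Lemma xTx_gt0 n (x : 'cV[R]_n) : x != 0 -> 0 < (x^T *m x) 0 0.
Proof.
move=> /matrix0Pn [i [j]]; rewrite ord1 => hij.
rewrite mxE (bigD1 i) //= !mxE.
have h1 : 0 < x i 0 * x i 0 by rewrite -expr2 lt_def sqrf_eq0 hij sqr_ge0.
have h2 : 0 <= \sum_(k < n | k != i) x^T 0 k * x k 0.
  by apply: sumr_ge0 => k _; rewrite mxE -expr2 sqr_ge0.
lra.
Qed.

Lemma xTx_ge0 n (x : 'cV[R]_n) : 0 <= (x^T *m x) 0 0.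
Proof.
have [->|h] := eqVneq x 0; last exact/ltW/xTx_gt0.
by rewrite mulmx0 mxE.
Qed.

End Core.

Section BigMax.
Variable R : rcfType.
Variable F : R[i] -> R.
Lemma bigmax_ge0 (s : seq R[i]) : 0 <= \big[Num.max/0]_(z <- s) F z.
Proof. elim: s => [|a s IH]; rewrite ?big_nil ?big_cons ?le_max ?IH ?orbT //. Qed.
Lemma le_bigmax_s (s : seq R[i]) z : z \in s -> F z <= \big[Num.max/0]_(z <- s) F z.
Proof.
elim: s => [|a s IH] //; rewrite in_cons big_cons le_max => /orP [/eqP->|/IH ->];
  by rewrite ?lexx ?orbT.
Qed.
Lemma bigmax_lt_s (s : seq R[i]) c : 0 < c -> (forall z, z \in s -> F z < c) ->
  \big[Num.max/0]_(z <- s) F z < c.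
Proof.
move=> c0; elim: s => [|a s IH] h; first by rewrite big_nil.
rewrite big_cons gt_max h ?mem_head //=; apply: IH => z zs.
by apply: h; rewrite in_cons zs orbT.
Qed.
End BigMax.

Section Spec.
Variable R : rcfType.
Variable n : nat.
Variable M : 'M[R]_n.
Hypothesis symM : M^T = M.
Local Notation toC := (fun x : R => x%:C%C).
Local Notation Mc := (map_mx toC M).
Local Open Scope sesquilinear_scope.

Lemma Mc_herm : Mc \is hermsymmx.
Proof.
apply/is_hermitianmxP; rewrite expr0 scale1r.
apply/matrixP => i j; rewrite !mxE conj_Creal ?complex_real //.
by rewrite -{1}symM mxE.
Qed.

Let P := spectralmx Mc.
Let d := spectral_diag Mc.

Lemma Mc_dec : Mc = P^t* *m diag_mx d *m P.
Proof.
have := orthomx_spectralP (A := Mc).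
rewrite hermitian_normalmx ?Mc_herm // => /(_ isT).
by rewrite invmx_unitary // spectral_unitarymx.
Qed.

Lemma PPt : P *m P^t* = 1%:M.
Proof. exact/unitarymxP/spectral_unitarymx. Qed.
Lemma PtP : P^t* *m P = 1%:M.
Proof. exact/mulmx1C/PPt. Qed.

Lemma d_real i : d 0 i = (complex.Re (d 0 i))%:C%C.
Proof.
rewrite RRe_real //.
by have /mxOverP := hermitian_spectral_diag_real Mc_herm; apply.
Qed.

Lemma root_eigs z : (z \in cplx_eigs M) = root (char_poly Mc) z.
Proof.
rewrite /cplx_eigs; case: closed_field_poly_normal => r /= hr.
by rewrite hr (monicP (char_poly_monic _)) scale1r root_prod_XsubC.
Qed.

Lemma d_eig i : d 0 i \in cplx_eigs M.
Proof.
rewrite root_eigs -eigenvalue_root_char.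
apply/eigenvalueP; exists ('e_i *m P).
  rewrite Mc_dec !mulmxA -(mulmxA _ P) PPt mulmx1.
  by rewrite -(rowE i (diag_mx d)) row_diag_mx -scalemxAl.
apply/eqP => h; have := congr1 (fun A => A *m P^t*) h.
rewrite -mulmxA PPt mulmx1 mul0mx => /matrixP/(_ 0 i).
by rewrite !mxE !eqxx /= => /eqP; rewrite oner_eq0.
Qed.

Lemma eig_d z : z \in cplx_eigs M -> exists i, z = d 0 i.
Proof.
rewrite root_eigs -eigenvalue_root_char => /eigenvalueP [v hv vn0].
pose w := v *m P^t*.
have hw : w *m diag_mx d = z *: w.
  have := congr1 (fun A => A *m P^t*) hv; rewrite Mc_dec !mulmxA -scalemxAl.
  by rewrite -(mulmxA _ P) PPt mulmx1.
have wn0 : w != 0.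
  apply: contra vn0 => /eqP hw0; apply/eqP.
  by rewrite -(mulmx1 v) -PtP mulmxA -/w hw0 mul0mx.
case/matrix0Pn: wn0 => i0 [j hj]; exists j.
have /matrixP/(_ i0 j) := hw; rewrite mul_mx_diag mxE [X in _ = X]mxE [z * _]mulrC.
by move=> h; apply/esym/(mulfI hj).
Qed.

Lemma d0_M0 : (forall i, d 0 i = 0) -> M = 0.
Proof.
move=> h; have hD : diag_mx d = 0.
  by apply/matrixP => i j; rewrite !mxE; case: (i == j); rewrite ?h ?mulr0n.
have := Mc_dec; rewrite hD mulmx0 mul0mx => /matrixP hM.
apply/matrixP => i j; have := hM i j; rewrite !mxE; by case.
Qed.
Local Notation rho := (spectral_radius M).

Lemma normc_toC (x : R) : Normc.normc (x%:C%C) = `|x|.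
Proof. by rewrite /= expr0n addr0 sqrtr_sqr. Qed.

Lemma d_le_rho i : `|complex.Re (d 0 i)| <= rho.
Proof. rewrite -normc_toC -d_real; exact: le_bigmax_s (d_eig i). Qed.

Lemma rho_gt0 : M != 0 -> 0 < rho.
Proof.
move=> M0; rewrite lt_def bigmax_ge0 andbT; apply: contra M0 => /eqP r0.
apply/eqP/d0_M0 => i.
have := d_le_rho i; rewrite r0 normr_le0 => /eqP h; by rewrite d_real h.
Qed.

Lemma form_lb (k : R) (x : 'cV[R]_n) :
  (1 - `|k| * rho) * (x^T *m x) 0 0 <= (x^T *m (1%:M + k *: M) *m x) 0 0.
Proof.
rewrite -lecR.
have e1 : forall m p (A : 'M[R]_(m,p)) a b, (A a b)%:C%C = (map_mx toC A) a b.
  by move=> *; rewrite mxE.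
rewrite rmorphM /= !e1 !map_mxM -!map_trmx map_mxD map_mx1 map_mxZ /=.
set xc := map_mx toC x.
have xT : xc^T = xc^t*.
  by apply/matrixP => a b; rewrite !mxE conj_Creal ?complex_real.
rewrite xT.
have h1 : 1%:M + k%:C%C *: Mc = P^t* *m (1%:M + k%:C%C *: diag_mx d) *m P.
  by rewrite mulmxDr mulmxDl mulmx1 PtP -scalemxAr -scalemxAl -Mc_dec.
rewrite h1.
set u := P *m xc.
have hu : xc^t* *m P^t* = u^t* by rewrite /u trmx_mul map_mxM.
have hx : xc^t* *m xc = u^t* *m u.
  by rewrite -hu /u mulmxA -(mulmxA _ (P^t*)) PtP mulmx1.
have h2 : xc^t* *m (P^t* *m (1%:M + k%:C%C *: diag_mx d) *m P) *m xc
   = u^t* *m (1%:M + k%:C%C *: diag_mx d) *m u.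
  by rewrite -hu /u !mulmxA.
have hE : 1%:M + k%:C%C *: diag_mx d = diag_mx (\row_j (1 + k%:C%C * d 0 j)).
  apply/matrixP => a b; rewrite !mxE.
  by case: (a == b); rewrite ?mulr1n ?mulr0n ?mulr0 ?addr0.
rewrite h2 hx hE mul_mx_diag !mxE mulr_sumr; apply: ler_sum => j _; rewrite !mxE.
rewrite mulrAC [X in _ <= X]mulrC; apply: ler_wpM2r.
  by rewrite mulrC mul_conjC_ge0.
rewrite d_real.
have -> : 1 + k%:C%C * (complex.Re (d 0 j))%:C%C = (1 + k * complex.Re (d 0 j))%:C%C.
  by rewrite rmorphD rmorphM /= rmorph1.
rewrite lecR.
have h3 := d_le_rho j.
have h4 : `|k * complex.Re (d 0 j)| <= `|k| * rho.
  by rewrite normrM; apply: ler_wpM2l => //; rewrite normr_ge0.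
have h5 := ler_norm (- (k * complex.Re (d 0 j))); rewrite normrN in h5.
lra.
Qed.

Lemma eig_pos (k l : R) (x : 'cV[R]_n) : x != 0 -> M *m x = l *: x ->
  0 < (x^T *m (1%:M + k *: M) *m x) 0 0 -> 0 < 1 + k * l.
Proof.
move=> xn0 hx.
rewrite -mulmxA mulmxDl mul1mx -scalemxAl hx scalerA mulmxDr -scalemxAr mxE.
rewrite [X in _ + X]mxE -{1}[(x^T *m x) 0 0]mul1r -mulrDl pmulr_lgt0 //.
exact: xTx_gt0.
Qed.

Lemma real_eigvec i : exists x : 'cV[R]_n,
  x != 0 /\ M *m x = complex.Re (d 0 i) *: x.
Proof.
set l := complex.Re (d 0 i).
pose e : 'cV[R[i]]_n := delta_mx i 0.
pose w := P^t* *m e.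
have hde : diag_mx d *m e = d 0 i *: e.
  apply/matrixP => a b; rewrite mul_diag_mx !mxE.
  by case: (eqVneq a i) => [->|ne] //; rewrite ?mulr0 ?(negbTE ne) /= ?mulr0.
have hw : Mc *m w = l%:C%C *: w.
  by rewrite Mc_dec /w -!mulmxA (mulmxA P) PPt mul1mx hde -scalemxAr /l -d_real.
have wn0 : w != 0.
  apply/eqP => h; have := congr1 (fun A => P *m A) h.
  rewrite /w mulmxA PPt mul1mx mulmx0 => /matrixP/(_ i 0).
  by rewrite !mxE !eqxx /= => /eqP; rewrite oner_eq0.
clearbody w.
pose a := map_mx (@complex.Re R) w; pose b := map_mx (@complex.Im R) w.
have ReM : forall v : 'cV[R[i]]_n, map_mx (@complex.Re R) (Mc *m v) = M *m map_mx (@complex.Re R) v.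
  move=> v; apply/matrixP => p q; rewrite !mxE raddf_sum; apply: eq_bigr => r _.
  by rewrite !mxE; case: (v r q) => ??; simpc.
have ImM : forall v : 'cV[R[i]]_n, map_mx (@complex.Im R) (Mc *m v) = M *m map_mx (@complex.Im R) v.
  move=> v; apply/matrixP => p q; rewrite !mxE raddf_sum; apply: eq_bigr => r _.
  by rewrite !mxE; case: (v r q) => ??; simpc.
have ha : M *m a = l *: a.
  rewrite -ReM hw; apply/matrixP => p q; rewrite !mxE.
  by case: (w p q) => ??; simpc.
have hb : M *m b = l *: b.
  rewrite -ImM hw; apply/matrixP => p q; rewrite !mxE.
  by case: (w p q) => ??; simpc.
case: (eqVneq a 0) => a0; last by exists a.
case: (eqVneq b 0) => b0; last by exists b.
exfalso; move/negP: wn0; apply; apply/eqP/matrixP => p q.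
move/matrixP: a0 => /(_ p q); move/matrixP: b0 => /(_ p q).
rewrite !mxE; by case: (w p q) => /= ?? -> ->.
Qed.

Theorem core (k : R) : 0 < k ->
  (forall x : 'cV[R]_n, x != 0 ->
     0 < (x^T *m (1%:M + k *: M) *m x) 0 0 /\
     0 < (x^T *m (1%:M + (- k) *: M) *m x) 0 0) <-> k * rho < 1.
Proof.
move=> k0; split.
- move=> h.
  have hl : forall i, k * `|complex.Re (d 0 i)| < 1.
    move=> i; have [x [xn0 hx]] := real_eigvec i; have [h1 h2] := h x xn0.
    have p1 := eig_pos xn0 hx h1; have p2 := eig_pos xn0 hx h2.
    rewrite -(ger0_norm (ltW k0)) -normrM ltr_norml; apply/andP; split; lra.
  have hr : rho < k^-1.
    apply: bigmax_lt_s; first by rewrite invr_gt0.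
    move=> z /eig_d [i ->]; rewrite d_real normc_toC.
    by rewrite -(ltr_pM2l k0) mulfV ?gt_eqF.
  by rewrite -(mulfV (lt0r_neq0 k0)) ltr_pM2l.
- move=> hk x xn0; have hx := xTx_gt0 xn0; split.
    have := form_lb k x; rewrite (ger0_norm (ltW k0)); apply: lt_le_trans.
    apply: mulr_gt0 => //; lra.
  have := form_lb (- k) x; rewrite normrN (ger0_norm (ltW k0)); apply: lt_le_trans.
  apply: mulr_gt0 => //; lra.
Qed.

End Spec.

Section Gen.
Variable R : rcfType.

Lemma tens_diag m p (A : 'M[R]_m) (B : 'M[R]_p) :
  is_diag_mx A -> is_diag_mx B -> is_diag_mx (A *t B).
Proof.
move=> /is_diag_mxP hA /is_diag_mxP hB; apply/is_diag_mxP => i j.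
rewrite -(mxtens_unindexK i) -(mxtens_unindexK j).
case: (mxtens_unindex i) => i1 i2; case: (mxtens_unindex j) => j1 j2 ne.
rewrite tensmxE; case: (eqVneq i1 j1) => [e1|n1]; last by rewrite hA ?mul0r.
subst j1; rewrite hB ?mulr0 //; apply: contra ne => /eqP e2.
by have -> : i2 = j2 by apply: val_inj.
Qed.

Lemma tens_posdiag m p (A : 'M[R]_m) (B : 'M[R]_p) :
  (forall i, 0 < A i i) -> (forall i, 0 < B i i) -> forall i, 0 < (A *t B) i i.
Proof.
move=> hA hB i; rewrite -(mxtens_unindexK i); case: (mxtens_unindex i) => i1 i2.
by rewrite tensmxE mulr_gt0.
Qed.

Lemma scale_diag m (a : R) (A : 'M[R]_m) : is_diag_mx A -> is_diag_mx (a *: A).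
Proof.
by move=> /is_diag_mxP hA; apply/is_diag_mxP => i j ne; rewrite mxE hA ?mulr0.
Qed.

Lemma diag_eq m (A : 'M[R]_m) : is_diag_mx A -> A = diag_mx (\row_i A i i).
Proof.
move=> /is_diag_mxP hA; apply/matrixP => i j; rewrite !mxE.
by case: (eqVneq i j) => [->|ne]; rewrite ?mulr1n // mulr0n hA.
Qed.

Lemma diag_sym m (A : 'M[R]_m) : is_diag_mx A -> A^T = A.
Proof. by move=> /diag_eq ->; rewrite tr_diag_mx. Qed.

Lemma Itilde_diag p : is_diag_mx (Itilde R p).
Proof. exact: diag_mx_is_diag. Qed.

Lemma Itilde_pos p i : 0 < Itilde R p i i.
Proof.
rewrite !mxE eqxx mulr1n; case: ifP => _; rewrite ?invr_gt0 ?ltr0n ?ltr01 //.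
Qed.

Lemma Itilde_sym p : (Itilde R p)^T = Itilde R p.
Proof. exact/diag_sym/Itilde_diag. Qed.

Lemma tens3_mul m1 m2 m3 n1 n2 n3 k1 k2 k3
  (A1 : 'M[R]_(m1, n1)) (A2 : 'M[R]_(m2, n2)) (A3 : 'M[R]_(m3, n3))
  (B1 : 'M[R]_(n1, k1)) (B2 : 'M[R]_(n2, k2)) (B3 : 'M[R]_(n3, k3)) :
  (A1 *t A2 *t A3) *m (B1 *t B2 *t B3) = (A1 *m B1) *t (A2 *m B2) *t (A3 *m B3).
Proof. by rewrite !tensmx_mul. Qed.

Lemma tens3_tr m1 m2 m3 n1 n2 n3
  (A1 : 'M[R]_(m1, n1)) (A2 : 'M[R]_(m2, n2)) (A3 : 'M[R]_(m3, n3)) :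
  (A1 *t A2 *t A3)^T = A1^T *t A2^T *t A3^T.
Proof. by rewrite !trmx_tens. Qed.

Lemma tens3E m1 m2 m3 n1 n2 n3
  (A1 : 'M[R]_(m1, n1)) (A2 : 'M[R]_(m2, n2)) (A3 : 'M[R]_(m3, n3)) i1 i2 i3 j1 j2 j3 :
  (A1 *t A2 *t A3) (mxtens_index (mxtens_index (i1, i2), i3))
     (mxtens_index (mxtens_index (j1, j2), j3)) = A1 i1 j1 * A2 i2 j2 * A3 i3 j3.
Proof. by rewrite !tensmxE. Qed.

Definition bf n (B : 'M[R]_n) (X Y : 'cV[R]_n) := (X^T *m B *m Y) 0 0.

Lemma bfDl n (B : 'M[R]_n) X X' Y : bf B (X + X') Y = bf B X Y + bf B X' Y.
Proof. by rewrite /bf linearD /= !mulmxDl mxE. Qed.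
Lemma bfDr n (B : 'M[R]_n) X Y Y' : bf B X (Y + Y') = bf B X Y + bf B X Y'.
Proof. by rewrite /bf mulmxDr mxE. Qed.
Lemma bfNl n (B : 'M[R]_n) X Y : bf B (- X) Y = - bf B X Y.
Proof. by rewrite /bf linearN /= !mulNmx mxE. Qed.
Lemma bfNr n (B : 'M[R]_n) X Y : bf B X (- Y) = - bf B X Y.
Proof. by rewrite /bf mulmxN mxE. Qed.
Lemma bfD n (B B' : 'M[R]_n) X Y : bf (B + B') X Y = bf B X Y + bf B' X Y.
Proof. by rewrite /bf mulmxDr mulmxDl mxE. Qed.
Lemma bfZ n (a : R) (B : 'M[R]_n) X Y : bf (a *: B) X Y = a * bf B X Y.
Proof. by rewrite /bf -scalemxAr -scalemxAl mxE. Qed.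
Lemma bf_sym n (B : 'M[R]_n) X Y : B^T = B -> bf B X Y = bf B Y X.
Proof.
move=> hB; rewrite /bf.
have -> : (X^T *m B *m Y) 0 0 = ((X^T *m B *m Y)^T) 0 0 by rewrite [in RHS]mxE.
by rewrite !trmx_mul trmxK hB mulmxA.
Qed.
Lemma bf_conj n (T B : 'M[R]_n) X Y : bf (T^T *m B *m T) X Y = bf B (T *m X) (T *m Y).
Proof. by rewrite /bf trmx_mul !mulmxA. Qed.
Lemma bf0 n (B : 'M[R]_n) X : bf B X 0 = 0.
Proof. by rewrite /bf mulmx0 mxE. Qed.

Lemma addE m p (A B : 'M[R]_(m, p)) i j : (A + B) i j = A i j + B i j.
Proof. by rewrite mxE. Qed.
Lemma scaleE m p a (A : 'M[R]_(m, p)) i j : (a *: A) i j = a * A i j.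
Proof. by rewrite mxE. Qed.

Lemma bf_block n (A B C D : 'M[R]_n) (x y : 'cV[R]_n) :
  ((col_mx x y)^T *m block_mx A B C D *m col_mx x y) 0 0 =
  bf A x x + bf B x y + bf C y x + bf D y y.
Proof.
rewrite tr_col_mx mul_row_block mul_row_col !mulmxDl !addE /bf.
ring.
Qed.

Lemma conjN m p (A : 'M[R]_(m, p)) (s : R) (B : 'M[R]_p) :
  (- A) *m (s *: B) *m (- A)^T = s *: (A *m B *m A^T).
Proof. by rewrite linearN /= !mulmxN !mulNmx opprK -scalemxAr -scalemxAl. Qed.

Lemma sym_conj m p (D : 'M[R]_(m, p)) (W : 'M[R]_p) :
  W^T = W -> (D *m W *m D^T)^T = D *m W *m D^T.
Proof. by move=> hW; rewrite !trmx_mul trmxK hW mulmxA. Qed.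

Lemma W01 p (h : (1 < p.+1)%N) (h0 : (0 < p)%N) :
  ((Wmx R p)^T *m Wmx R p) ord0 (Ordinal h) = -1.
Proof.
case: p h h0 => [//|p] h _.
rewrite mxE big_ord_recl big1 => [|k _]; rewrite !mxE /=.
  ring.
by rewrite subrr mul0r.
Qed.

Lemma sqrt_diag_TS n (f : 'I_n -> R) : (forall i, 0 < f i) ->
  diag_mx (\row_i Num.sqrt (f i)) *m diag_mx (\row_i (Num.sqrt (f i))^-1) = 1%:M.
Proof.
move=> h; rewrite mulmx_diag -diag_const_mx; congr diag_mx; apply/rowP => i.
by rewrite !mxE mulfV // gt_eqF // sqrtr_gt0.
Qed.
Lemma sqrt_diag_ST n (f : 'I_n -> R) : (forall i, 0 < f i) ->
  diag_mx (\row_i (Num.sqrt (f i))^-1) *m diag_mx (\row_i Num.sqrt (f i)) = 1%:M.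
Proof.
move=> h; rewrite mulmx_diag -diag_const_mx; congr diag_mx; apply/rowP => i.
by rewrite !mxE mulVf // gt_eqF // sqrtr_gt0.
Qed.
Lemma sqrt_diag_TT n (f : 'I_n -> R) : (forall i, 0 < f i) ->
  diag_mx (\row_i Num.sqrt (f i)) *m diag_mx (\row_i Num.sqrt (f i)) = diag_mx (\row_i f i).
Proof.
move=> h; rewrite mulmx_diag; congr diag_mx; apply/rowP => i.
by rewrite !mxE -expr2 sqr_sqrtr // ltW.
Qed.

End Gen.

Section Model2.
Variables (R : rcfType) (hbar mass dx dy dz : R) (nx ny nz : nat).
Hypotheses (hb : 0 < hbar) (hm : 0 < mass) (hx : 0 < dx) (hy : 0 < dy) (hz : 0 < dz).
Variable U : 'I_nx.+1 -> 'I_ny.+1 -> 'I_nz.+1 -> R.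

Local Notation A := (DV2 dx dy dz nx ny nz).
Local Notation H := (Hmx hbar mass dx dy dz U).

Lemma DV2_diag : is_diag_mx A.
Proof.
rewrite /DV2; apply/scale_diag/tens_diag; [apply/tens_diag|]; exact: Itilde_diag.
Qed.

Lemma DV2_pos i : 0 < A i i.
Proof.
rewrite /DV2 scaleE mulr_gt0 ?mulr_gt0 //.
apply: tens_posdiag => [j|j]; [apply: tens_posdiag => k|]; exact: Itilde_pos.
Qed.

Lemma Dl1_inv : invmx (Dl1 dx dy dz nx ny nz) =
  bdiag3 (dx^-1)%:M (dy^-1)%:M (dz^-1)%:M.
Proof.
have h : Dl1 dx dy dz nx ny nz *m bdiag3 (dx^-1)%:M (dy^-1)%:M (dz^-1)%:M = 1%:M.
  rewrite /Dl1 /bdiag3. rewrite (mulmx_block (dx%:M : 'M[R]_(Ex nx ny nz))).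
 rewrite !mulmx_block !mulmx0 !mul0mx !addr0 !add0r -!scalar_mxM.
  by rewrite !mulfV ?gt_eqF // -!scalar_mx_block.
rewrite -[invmx _]mul1mx -(mulmx1C h) -mulmxA mulmxV ?mulmx1 //.
by case: (mulmx1_unit h).
Qed.

Local Notation Wx := ((dx^-1 * (dy * dz)) *: (Itilde R nz.+1 *t Itilde R ny.+1 *t (1%:M : 'M[R]_nx))).
Local Notation Wy := ((dy^-1 * (dx * dz)) *: (Itilde R nz.+1 *t (1%:M : 'M[R]_ny) *t Itilde R nx.+1)).
Local Notation Wz := ((dz^-1 * (dx * dy)) *: ((1%:M : 'M[R]_nz) *t Itilde R ny.+1 *t Itilde R nx.+1)).

Lemma W_dec : DS2 dx dy dz nx ny nz *m invmx (Dl1 dx dy dz nx ny nz) = bdiag3 Wx Wy Wz.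
Proof.
rewrite Dl1_inv /DS2 /bdiag3 !mulmx_block !mulmx0 !mul0mx !addr0 !add0r.
by rewrite !mul_mx_scalar !scalerA.
Qed.

Lemma K_dec : Dmx R nx ny nz *m DS2 dx dy dz nx ny nz *m invmx (Dl1 dx dy dz nx ny nz)
   *m (Dmx R nx ny nz)^T =
   Dx R nx ny nz *m Wx *m (Dx R nx ny nz)^T +
   (Dy R nx ny nz *m Wy *m (Dy R nx ny nz)^T + Dz R nx ny nz *m Wz *m (Dz R nx ny nz)^T).
Proof.
rewrite -(mulmxA (Dmx R nx ny nz)) W_dec /Dmx /bdiag3.
rewrite mul_row_block !mulmx0 !addr0 !add0r mul_row_block !mulmx0 !addr0 !add0r.
by rewrite !tr_row_mx !mul_row_col.
Qed.

Lemma W_sym : Wx^T = Wx /\ Wy^T = Wy /\ Wz^T = Wz.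
Proof. by rewrite !linearZ /= !tens3_tr !Itilde_sym !trmx1. Qed.

Lemma H_sym : H^T = H.
Proof.
rewrite /Hmx linearD linearZ /= K_dec !linearD /=.
have [h1 [h2 h3]] := W_sym.
rewrite !sym_conj //; congr (_ + _).
rewrite trmx_mul (diag_sym DV2_diag) /DU tr_diag_mx (diag_eq DV2_diag).
exact: diag_mxC.
Qed.

Lemma H_neq0 : (0 < nx)%N -> H != 0.
Proof.
move=> h0; have h1 : (1 < nx.+1)%N by rewrite ltnS.
pose i0 : 'I_(Nn nx ny nz) :=
  mxtens_index (mxtens_index (ord0 : 'I_nz.+1, ord0 : 'I_ny.+1), ord0 : 'I_nx.+1).
pose i1 : 'I_(Nn nx ny nz) :=
  mxtens_index (mxtens_index (ord0 : 'I_nz.+1, ord0 : 'I_ny.+1), Ordinal h1).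
have ne : (i0 == i1) = false.
  apply/negbTE/eqP => e; have := can_inj (@mxtens_indexK _ _) e.
  by move=> e2; have := congr1 (fun p => nat_of_ord p.2) e2.
apply/eqP => /matrixP /(_ i0 i1).
rewrite /Hmx addE scaleE K_dec !addE.
rewrite (diag_eq DV2_diag) /DU mulmx_diag [diag_mx _ i0 i1]mxE ne mulr0n addr0 [in RHS]mxE.
rewrite /Dx /Dy /Dz !conjN !scaleE !tens3_tr !trmx1 !trmxK !tens3_mul !mul1mx !mulmx1.
rewrite /i0 /i1 !tens3E W01 //.
rewrite [Itilde R nx.+1 ord0 _](is_diag_mxP (Itilde_diag R _)) // !mulr0 !addr0.
move=> /eqP; apply/negP; rewrite mulrN1 !mulrN oppr_eq0; apply: lt0r_neq0.
have k0 : 0 < hbar ^+ 2 / (2 * mass).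
  by rewrite divr_gt0 ?exprn_gt0 ?mulr_gt0 ?ltr0n.
have s0 : 0 < dx^-1 * (dy * dz) by rewrite mulr_gt0 ?invr_gt0 ?mulr_gt0.
apply: mulr_gt0 => //; apply: mulr_gt0 => //; apply: mulr_gt0; exact: Itilde_pos.
Qed.

End Model2.

Unset Implicit Arguments.

Theorem lemma1 (R : rcfType) (hbar mass dx dy dz : R) (nx ny nz : nat)
  (U : 'I_nx.+1 -> 'I_ny.+1 -> 'I_nz.+1 -> R) (dt : R) :
  0 < hbar -> 0 < mass -> 0 < dx -> 0 < dy -> 0 < dz ->
  (0 < nx)%N -> (0 < ny)%N -> (0 < nz)%N -> 0 < dt ->
  posdef (Pmx hbar mass dx dy dz U dt) <->
  dt < 2 / spectral_radius
             (hbar^-1 *: (diag_invsqrt (DV2 dx dy dz nx ny nz)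
                          *m Hmx hbar mass dx dy dz U
                          *m diag_invsqrt (DV2 dx dy dz nx ny nz))).
Proof.
move=> hb hm hx hy hz hnx hny hnz hdt.
set A := DV2 dx dy dz nx ny nz.
set H := Hmx hbar mass dx dy dz U.
set S := diag_invsqrt A.
set M' := hbar^-1 *: (S *m H *m S).
pose T : 'M[R]_(Nn nx ny nz) := diag_mx (\row_i Num.sqrt (A i i)).
have Apos : forall i, 0 < A i i by move=> i; apply: DV2_pos.
have sqpos : forall i, 0 < Num.sqrt (A i i) by move=> i; rewrite sqrtr_gt0.
have TS : T *m S = 1%:M.
  exact: (sqrt_diag_TS (f := fun i => A i i) Apos).
have ST : S *m T = 1%:M by exact: (sqrt_diag_ST (f := fun i => A i i) Apos).
have Adiag : is_diag_mx A by apply: DV2_diag.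
have TT : T *m T = A.
  rewrite [RHS](diag_eq Adiag); exact: (sqrt_diag_TT (f := fun i => A i i) Apos).
have Tsym : T^T = T by rewrite tr_diag_mx.
have Ssym : S^T = S by rewrite tr_diag_mx.
have Asym : A^T = A by apply: diag_sym.
have Hsym : H^T = H by apply: H_sym.
have Msym : M'^T = M' by rewrite linearZ /= !trmx_mul Ssym Hsym mulmxA.
have HT : H = hbar *: (T^T *m M' *m T).
  rewrite /M' Tsym -scalemxAr -scalemxAl scalerA mulfV ?gt_eqF // scale1r.
  by rewrite !mulmxA TS mul1mx -mulmxA ST mulmx1.
have AT : A = T^T *m 1%:M *m T by rewrite Tsym mulmx1 TT.
have Hn0 : H != 0 by apply: H_neq0.
have M'n0 : M' != 0.
  by apply: contra Hn0 => /eqP e; rewrite HT e mulmx0 mul0mx scaler0.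
have rho0 : 0 < spectral_radius M' by apply: rho_gt0.
clearbody M'.
set rho := spectral_radius M'.
set k := dt / 2.
have k0 : 0 < k by rewrite divr_gt0.
have key := core Msym k0.
have arith : k * rho < 1 <-> dt < 2 / rho.
  rewrite ltr_pdivlMr // /k; split => h'; lra.
have qf : forall x y : 'cV[R]_(Nn nx ny nz),
  ((col_mx x y)^T *m Pmx hbar mass dx dy dz U dt *m col_mx x y) 0 0 =
  bf 1%:M (T *m x) (T *m x) + bf 1%:M (T *m y) (T *m y)
   - k * (bf M' (T *m x) (T *m y) + bf M' (T *m y) (T *m x)).
  move=> x y.
  have AT' : DV2 dx dy dz nx ny nz = T^T *m 1%:M *m T := AT.
  have HT' : Hmx hbar mass dx dy dz U = hbar *: (T^T *m M' *m T) := HT.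
  rewrite /Pmx bf_block AT' HT' !bfZ !bf_conj /k !mulrA.
  have c : - (dt / (2 * hbar)) * hbar = - (dt / 2).
    by rewrite mulNr invfM mulrA divfK ?gt_eqF.
  rewrite c; ring.
have G : forall Z : 'cV[R]_(Nn nx ny nz), bf (1%:M + k *: M') Z Z = bf 1%:M Z Z + k * bf M' Z Z.
  by move=> Z; rewrite bfD bfZ.
have G' : forall Z : 'cV[R]_(Nn nx ny nz), bf (1%:M + (-k) *: M') Z Z = bf 1%:M Z Z - k * bf M' Z Z.
  by move=> Z; rewrite bfD bfZ mulNr.
have TSX : forall X : 'cV[R]_(Nn nx ny nz), T *m (S *m X) = X by move=> X; rewrite mulmxA TS mul1mx.
have sym1 : forall X Y : 'cV[R]_(Nn nx ny nz), bf 1%:M X Y = bf 1%:M Y X.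
  by move=> X Y; apply: bf_sym; rewrite trmx1.
have symM : forall X Y : 'cV[R]_(Nn nx ny nz), bf M' X Y = bf M' Y X by move=> X Y; apply: bf_sym.
rewrite -arith -key; split.
- case=> _ hP X Xn0.
  have SXn0 : S *m X != 0.
    by apply: contra Xn0 => /eqP e; rewrite -(TSX X) e mulmx0.
  have v1 : col_mx (S *m X) (S *m X) != 0 by rewrite col_mx_eq0 negb_and SXn0.
  have v2 : col_mx (S *m X) (- (S *m X)) != 0 by rewrite col_mx_eq0 negb_and SXn0.
  have := hP _ v1; have := hP _ v2; rewrite !qf mulmxN !TSX.
  move=> h2 h1.
  change (0 < bf (1%:M + k *: M') X X /\ 0 < bf (1%:M + (-k) *: M') X X).
  rewrite G G'; rewrite !bfNl !bfNr opprK in h2.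
  by split; lra.
- move=> h; split.
    have Asym' : (DV2 dx dy dz nx ny nz)^T = DV2 dx dy dz nx ny nz := Asym.
    have Hsym' : (Hmx hbar mass dx dy dz U)^T = Hmx hbar mass dx dy dz U := Hsym.
    by rewrite /Pmx tr_block_mx Asym' linearZ /= Hsym'.
  move=> v vn0; rewrite -(vsubmxK v) qf.
  set x := usubmx v; set y := dsubmx v.
  have hnn : forall Z : 'cV[R]_(Nn nx ny nz), 0 <= bf (1%:M + k *: M') Z Z /\ 0 <= bf (1%:M + (-k) *: M') Z Z.
    move=> Z; case: (eqVneq Z 0) => [->|Zn0]; first by rewrite !bf0.
    by have [? ?] := h Z Zn0; split; apply: ltW.
  have XY : (T *m x) + (T *m y) != 0 \/ (T *m x) - (T *m y) != 0.
    case: (eqVneq (T *m x + T *m y) 0) => e1; last by left.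
    case: (eqVneq (T *m x - T *m y) 0) => e2; last by right.
    exfalso; move/negP: vn0; apply; rewrite -(vsubmxK v) col_mx_eq0 -/x -/y.
    have eX : T *m x = 0.
      have : (T *m x + T *m y) + (T *m x - T *m y) = 2%:R *: (T *m x).
        by rewrite addrACA subrr addr0 scaler_nat.
      rewrite e1 e2 addr0 => /esym /eqP; rewrite scaler_eq0 pnatr_eq0 /= => /eqP //.
    have eY : T *m y = 0 by move: e1; rewrite eX add0r.
    have ex : x = 0 by rewrite -(mul1mx x) -ST -mulmxA eX mulmx0.
    have ey : y = 0 by rewrite -(mul1mx y) -ST -mulmxA eY mulmx0.
    by rewrite ex ey eqxx.
  set X := T *m x; set Y := T *m y.
  have E : 2 * (bf 1%:M X X + bf 1%:M Y Y - k * (bf M' X Y + bf M' Y X)) =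
     bf (1%:M + (-k) *: M') (X + Y) (X + Y) + bf (1%:M + k *: M') (X - Y) (X - Y).
    rewrite !bfD !bfZ !bfDl !bfDr !bfNl !bfNr (sym1 Y X) (symM Y X); ring.
  have [a1 a2] := hnn (X + Y); have [b1 b2] := hnn (X - Y).
  case: XY => [n1|n2].
    have [_ c2] := h _ n1.
    have c2' : 0 < bf (1%:M + - k *: M') (X + Y) (X + Y) := c2.
    lra.
  have [c1 _] := h _ n2.
  have c1' : 0 < bf (1%:M + k *: M') (X - Y) (X - Y) := c1.
  lra.
Qed.
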